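(* Let $p,l$ be integers with $2\le l<p/2$ and $\gcd(p,l)=1$, and let $\vec r:\mathbb{Z}\to\mathbb{R}^2$ be a nondegenerate discrete planar curve with constant centroaffine curvatures $\kappa_k=1$ and $\bar\kappa_k=2\cos\frac{2l\pi}{p}$ for all $k$. Then $\vec r$ is closed with period $p$ and is not simple (it has self-intersections).
   Context: A discrete planar curve is a map $\vec r:\mathbb{Z}\to\mathbb{R}^2$; write $\vec r_k=\vec r(k)$ and $\vec t_k=\vec r_{k+1}-\vec r_k$. $[\vec a,\vec b]$ denotes the $2\times2$ determinant. The curve is nondegenerate if $[\vec t_{k-1},\vec t_k]\ne0$ for all $k$. Its first and second centroaffine curvatures are $\kappa_k=\frac{[\vec t_k,\vec t_{k+1}]}{[\vec t_{k-1},\vec t_k]}$, $\bar\kappa_k=\frac{[\vec t_{k-1},\vec t_{k+1}]}{[\vec t_{k-1},\vec t_k]}$. Closed with period $p$: $\vec r(k+p)=\vec r(k)$ for all $k$, $p$ minimal. Extend $\vec r$ to $\mathbb{R}$ by linear interpolation on each $[k,k+1]$; a closed curve is simple if this map is injective on $[k,k+p)$. *)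

(* Defs.v *)
From Stdlib Require Import Reals ZArith.
Open Scope R_scope.

Definition vec := (R * R)%type.
Definition vadd (a b : vec) : vec := (fst a + fst b, snd a + snd b).
Definition vsub (a b : vec) : vec := (fst a - fst b, snd a - snd b).
Definition vscale (c : R) (a : vec) : vec := (c * fst a, c * snd a).
Definition det (a b : vec) : R := fst a * snd b - snd a * fst b.

Definition tangent (r : Z -> vec) (k : Z) : vec := vsub (r (k + 1)%Z) (r k).

Definition nondegenerate (r : Z -> vec) : Prop :=
  forall k : Z, det (tangent r (k - 1)%Z) (tangent r k) <> 0.

Definition kappa (r : Z -> vec) (k : Z) : R :=
  det (tangent r k) (tangent r (k + 1)%Z) / det (tangent r (k - 1)%Z) (tangent r k).

Definition kappabar (r : Z -> vec) (k : Z) : R :=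
  det (tangent r (k - 1)%Z) (tangent r (k + 1)%Z) / det (tangent r (k - 1)%Z) (tangent r k).

Definition closed_with_period (r : Z -> vec) (p : Z) : Prop :=
  (0 < p)%Z /\
  (forall k : Z, r (k + p)%Z = r k) /\
  (forall q : Z, (0 < q < p)%Z -> exists k : Z, r (k + q)%Z <> r k).

(* linear interpolation on each [k, k+1]; Int_part s is the floor of s *)
Definition interp (r : Z -> vec) (s : R) : vec :=
  let k := Int_part s in vadd (r k) (vscale (s - IZR k) (tangent r k)).

Definition simple (r : Z -> vec) (p : Z) : Prop :=
  exists k : Z, forall s1 s2 : R,
    IZR k <= s1 < IZR (k + p) -> IZR k <= s2 < IZR (k + p) ->
    interp r s1 = interp r s2 -> s1 = s2.

(* Main.v *)
Require Import Defs.
From Stdlib Require Import Reals ZArith Lra Lia Classical_Prop.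
Open Scope R_scope.
Lemma cos_perZ (x : R) (n : Z) : cos (x + 2 * IZR n * PI) = cos x.
Proof.
  destruct (Z_le_gt_dec 0 n) as [H|H].
  - rewrite <- (Z2Nat.id n H), <- INR_IZR_INZ. apply cos_period.
  - pose proof (cos_period (x + 2 * IZR n * PI) (Z.to_nat (- n))) as E.
    rewrite INR_IZR_INZ, Z2Nat.id in E by lia. rewrite <- E.
    f_equal. rewrite opp_IZR. ring.
Qed.

Lemma sin_perZ (x : R) (n : Z) : sin (x + 2 * IZR n * PI) = sin x.
Proof.
  destruct (Z_le_gt_dec 0 n) as [H|H].
  - rewrite <- (Z2Nat.id n H), <- INR_IZR_INZ. apply sin_period.
  - pose proof (sin_period (x + 2 * IZR n * PI) (Z.to_nat (- n))) as E.
    rewrite INR_IZR_INZ, Z2Nat.id in E by lia. rewrite <- E.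
    f_equal. rewrite opp_IZR. ring.
Qed.

Definition Fcs (th a b : R) (k : Z) := cos (IZR k * th) * a + sin (IZR k * th) * b.

Lemma Fcs_rec th a b k : Fcs th a b (k + 1) = 2 * cos th * Fcs th a b k - Fcs th a b (k - 1).
Proof.
  unfold Fcs. rewrite plus_IZR, minus_IZR.
  replace ((IZR k + 1) * th) with (IZR k * th + th) by ring.
  replace ((IZR k - 1) * th) with (IZR k * th - th) by ring.
  rewrite cos_plus, cos_minus, sin_plus, sin_minus. ring.
Qed.

Lemma rec_closed (th : R) (f : Z -> R) :
  sin th <> 0 -> (forall k, f (k + 1)%Z = 2 * cos th * f k - f (k - 1)%Z) ->
  exists a b, forall k, f k = cos (IZR k * th) * a + sin (IZR k * th) * b.
Proof.
  intros Hs Hr.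
  exists (f 0%Z), ((f 1%Z - cos th * f 0%Z) / sin th).
  set (a := f 0%Z). set (b := (f 1%Z - cos th * f 0%Z) / sin th).
  cut (forall k, f k = Fcs th a b k /\ f (k+1)%Z = Fcs th a b (k+1)).
  { intros H k. apply (H k). }
  apply Z.peano_ind.
  - unfold Fcs. simpl (0+1)%Z. rewrite Rmult_0_l, Rmult_1_l, cos_0, sin_0.
    unfold a, b. split; [ring|]. field. exact Hs.
  - intros x [H1 H2]. unfold Z.succ. split; [exact H2|].
    replace (x + 1 + 1)%Z with ((x+1) + 1)%Z by ring.
    rewrite Hr, Fcs_rec. replace (x + 1 - 1)%Z with x by ring.
    rewrite H1, H2. reflexivity.
  - intros x [H1 H2]. unfold Z.pred. replace (x + -1 + 1)%Z with x by ring.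
    split; [|exact H1].
    pose proof (Hr x) as E. pose proof (Fcs_rec th a b x) as E2.
    replace (x + -1)%Z with (x - 1)%Z by ring.
    rewrite H1, H2 in E. lra.
Qed.

Lemma step_id th a b P Q Y :
  cos th <> 1 ->
  P = ((cos th - 1) * a - sin th * b) / (2 - 2 * cos th) ->
  Q = (sin th * a + (cos th - 1) * b) / (2 - 2 * cos th) ->
  (cos (Y + th) * P + sin (Y + th) * Q) - (cos Y * P + sin Y * Q)
  = cos Y * a + sin Y * b.
Proof.
  intros Hc HP HQ.
  assert (Hd : 2 - 2 * cos th <> 0) by lra.
  pose proof (sin2_cos2 th) as Hpy. unfold Rsqr in Hpy.
  assert (E1 : (cos th - 1) * P + sin th * Q = a).
  { rewrite HP, HQ. apply (Rmult_eq_reg_r (2 - 2 * cos th)); [|exact Hd].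
    field_simplify; [|exact Hd]. replace (sin th ^ 2) with (1 - cos th ^ 2) by (rewrite <- Hpy; ring); ring. }
  assert (E2 : - sin th * P + (cos th - 1) * Q = b).
  { rewrite HP, HQ. apply (Rmult_eq_reg_r (2 - 2 * cos th)); [|exact Hd].
    field_simplify; [|exact Hd]. replace (sin th ^ 2) with (1 - cos th ^ 2) by (rewrite <- Hpy; ring); ring. }
  rewrite cos_plus, sin_plus. rewrite <- E1, <- E2. ring.
Qed.

Lemma sum_closed (th : R) (g : Z -> R) (a b : R) :
  cos th <> 1 ->
  (forall k, g (k + 1)%Z - g k = cos (IZR k * th) * a + sin (IZR k * th) * b) ->
  exists C P Q, forall k, g k = C + cos (IZR k * th) * P + sin (IZR k * th) * Q.
Proof.
  intros Hc Hg.
  set (P := ((cos th - 1) * a - sin th * b) / (2 - 2 * cos th)).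
  set (Q := (sin th * a + (cos th - 1) * b) / (2 - 2 * cos th)).
  exists (g 0%Z - P), P, Q.
  apply Z.peano_ind.
  - simpl. rewrite Rmult_0_l, cos_0, sin_0. ring.
  - intros x H. unfold Z.succ.
    pose proof (step_id th a b P Q (IZR x * th) Hc eq_refl eq_refl) as E.
    pose proof (Hg x) as E2. rewrite plus_IZR.
    replace ((IZR x + 1) * th) with (IZR x * th + th) by ring. lra.
  - intros x H. unfold Z.pred.
    pose proof (step_id th a b P Q (IZR (x + -1) * th) Hc eq_refl eq_refl) as E.
    pose proof (Hg (x + -1)%Z) as E2. replace (x + -1 + 1)%Z with x in E2 by ring.
    replace (IZR (x + -1) * th + th) with (IZR x * th) in E.
    2:{ rewrite plus_IZR. ring. }
    lra.
Qed.

Lemma rec_from_det (u1 u2 v1 v2 w1 w2 c D : R) : D <> 0 ->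
  u1*v2 - u2*v1 = D -> v1*w2 - v2*w1 = D -> u1*w2 - u2*w1 = c*D ->
  w1 = c*v1 - u1 /\ w2 = c*v2 - u2.
Proof.
  intros HD H1 H2 H3. split.
  - apply (Rmult_eq_reg_r D); [|exact HD].
    transitivity (-u1*(v1*w2-v2*w1) + v1*(u1*w2-u2*w1)).
    + rewrite <- H1. ring.
    + rewrite H2, H3. ring.
  - apply (Rmult_eq_reg_r D); [|exact HD].
    transitivity (-u2*(v1*w2-v2*w1) + v2*(u1*w2-u2*w1)).
    + rewrite <- H1. ring.
    + rewrite H2, H3. ring.
Qed.

Lemma Int_part_shift (a : Z) (s : R) : 0 <= s < 1 -> Int_part (IZR a + s) = a.
Proof.
  intros Hs. unfold Int_part.
  rewrite <- (tech_up (IZR a + s) (a + 1)); [lia| |]; rewrite plus_IZR; lra.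
Qed.

Lemma comb C P Q ca ca1 cb cb1 sa sa1 sb sb1 s0 s1 :
  ca + s0*(ca1-ca) = cb + s1*(cb1 - cb) ->
  sa + s0*(sa1-sa) = sb + s1*(sb1 - sb) ->
  (C + ca*P + sa*Q) + s0*((C + ca1*P + sa1*Q) - (C+ca*P+sa*Q)) =
  (C + cb*P + sb*Q) + s1*((C + cb1*P + sb1*Q) - (C+cb*P+sb*Q)).
Proof.
  intros H1 H2.
  replace ((C + ca*P + sa*Q) + s0*((C + ca1*P + sa1*Q) - (C+ca*P+sa*Q)))
    with (C + P*(ca + s0*(ca1-ca)) + Q*(sa + s0*(sa1-sa))) by ring.
  rewrite H1, H2. ring.
Qed.

Lemma cross_id (psi phi : R) :
  sin psi + sin phi <> 0 ->
  let s0 := sin psi / (sin psi + sin phi) in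
  cos 0 + s0 * (cos (psi + phi) - cos 0) = cos (psi - phi) + (1 - s0) * (cos (psi + psi) - cos (psi - phi)) /\
  sin 0 + s0 * (sin (psi + phi) - sin 0) = sin (psi - phi) + (1 - s0) * (sin (psi + psi) - sin (psi - phi)).
Proof.
  intros Hd s0. unfold s0.
  pose proof (sin2_cos2 psi) as Hpy. unfold Rsqr in Hpy.
  rewrite cos_0, sin_0, !cos_plus, !sin_plus, !cos_minus, !sin_minus.
  split; apply (Rmult_eq_reg_r (sin psi + sin phi)); try exact Hd;
  field_simplify; try exact Hd; replace (cos psi ^ 2) with (1 - sin psi ^ 2) by (rewrite <- Hpy; ring); ring.
Qed.

Theorem proposition3p13 (p l : Z) (r : Z -> vec) :
  (2 <= l)%Z -> (2 * l < p)%Z -> Z.gcd p l = 1%Z ->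
  nondegenerate r ->
  (forall k : Z, kappa r k = 1) ->
  (forall k : Z, kappabar r k = 2 * cos (2 * IZR l * PI / IZR p)) ->
  closed_with_period r p /\ ~ simple r p.
Proof.
  intros Hl Hlp Hg Hnd Hk Hkb.
  set (th := 2 * IZR l * PI / IZR p) in *.
  assert (Hp : 0 < IZR p) by (apply IZR_lt; lia).
  assert (Hlr : 2 <= IZR l) by (apply IZR_le; lia).
  assert (Hlpr : 2 * IZR l < IZR p) by (rewrite <- mult_IZR; apply IZR_lt; lia).
  pose proof PI_RGT_0 as Hpi.
  assert (Hth0 : 0 < th).
  { unfold th. apply Rdiv_lt_0_compat; [nra|lra]. }
  assert (HthPI : th < PI).
  { unfold th. apply (Rmult_lt_reg_r (IZR p)); [lra|].
    unfold Rdiv. rewrite Rmult_assoc, Rinv_l by lra. nra. }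
  assert (Hs : 0 < sin th) by (apply sin_gt_0; lra).
  assert (Hc : cos th <> 1).
  { intro E. pose proof (sin2_cos2 th) as Hpy. unfold Rsqr in Hpy. rewrite E in Hpy. nra. }
  assert (Hrec : forall k, fst (tangent r (k+1)) = 2 * cos th * fst (tangent r k) - fst (tangent r (k-1))
                        /\ snd (tangent r (k+1)) = 2 * cos th * snd (tangent r k) - snd (tangent r (k-1))).
  { intro k. pose proof (Hnd k) as HD. pose proof (Hk k) as E1. pose proof (Hkb k) as E2.
    unfold kappa in E1. unfold kappabar in E2. fold th in E2.
    set (D := det (tangent r (k - 1)) (tangent r k)) in *.
    assert (F1 : det (tangent r k) (tangent r (k + 1)) = D).
    { replace (det (tangent r k) (tangent r (k + 1))) with (det (tangent r k) (tangent r (k + 1)) / D * D) by (field; exact HD). rewrite E1. ring. }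
    assert (F2 : det (tangent r (k-1)) (tangent r (k + 1)) = 2 * cos th * D).
    { replace (det (tangent r (k-1)) (tangent r (k + 1))) with (det (tangent r (k-1)) (tangent r (k + 1)) / D * D) by (field; exact HD). rewrite E2. ring. }
    unfold D, det in *.
    eapply rec_from_det; [exact HD| reflexivity | exact F1 | exact F2]. }
  destruct (rec_closed th (fun k => fst (tangent r k)) ltac:(lra) (fun k => proj1 (Hrec k))) as [a1 [b1 Htx]].
  destruct (rec_closed th (fun k => snd (tangent r k)) ltac:(lra) (fun k => proj2 (Hrec k))) as [a2 [b2 Hty]].
  cbv beta in Htx, Hty.
  destruct (sum_closed th (fun k => fst (r k)) a1 b1 Hc) as [Cx [Px [Qx Hrx]]].
  { intro k. rewrite <- Htx. unfold tangent, vsub. simpl. ring. }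
  destruct (sum_closed th (fun k => snd (r k)) a2 b2 Hc) as [Cy [Py [Qy Hry]]].
  { intro k. rewrite <- Hty. unfold tangent, vsub. simpl. ring. }
  cbv beta in Hrx, Hry.
  assert (Hper : forall k m, IZR (k + m * p) * th = IZR k * th + 2 * IZR (m * l) * PI).
  { intros k m. unfold th. rewrite plus_IZR, !mult_IZR. field. lra. }
  assert (Hrp : forall k m, r (k + m * p)%Z = r k).
  { intros k m. rewrite (surjective_pairing (r (k + m * p)%Z)), (surjective_pairing (r k)).
    rewrite Hrx, Hry, Hrx, Hry, Hper, cos_perZ, sin_perZ. reflexivity. }
  split.
  - split; [lia|]. split.
    + intro k. replace (k + p)%Z with (k + 1 * p)%Z by ring. apply Hrp.
    + intros q Hq. apply Classical_Prop.NNPP. intro Hn.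
      assert (Hall : forall k, r (k + q)%Z = r k).
      { intro k. apply Classical_Prop.NNPP. intro Hk'. apply Hn. exists k. exact Hk'. }
      assert (T0 : tangent r q = tangent r 0).
      { unfold tangent. replace (q+1)%Z with (1+q)%Z by ring. rewrite Hall. simpl.
        rewrite <- (Hall 0%Z). simpl. reflexivity. }
      assert (Hdet : a1*b2 - a2*b1 <> 0).
      { pose proof (Hnd 1%Z) as N. simpl (1-1)%Z in N. unfold det in N.
        rewrite (Htx 0%Z), (Hty 0%Z), (Htx 1%Z), (Hty 1%Z) in N.
        rewrite Rmult_0_l, Rmult_1_l, cos_0, sin_0 in N.
        intro E. apply N. transitivity (sin th * (a1*b2-a2*b1)); [ring | rewrite E; ring]. }
      assert (E1 := f_equal fst T0). assert (E2 := f_equal snd T0).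
      rewrite Htx, Htx in E1. rewrite Hty, Hty in E2.
      rewrite Rmult_0_l, cos_0, sin_0 in E1, E2.
      set (x := IZR q * th) in *.
      assert (X : (cos x - 1)*(a1*b2-a2*b1) = ((cos x*a1 + sin x*b1) - a1)*b2 - ((cos x*a2+sin x*b2) - a2)*b1) by ring.
      rewrite E1, E2 in X.
      assert (Hcq : cos x = 1).
      { destruct (Rmult_integral (cos x - 1) (a1*b2-a2*b1)) as [Z|Z]; [rewrite X; ring|lra|contradiction]. }
      replace x with (2 * (x/2)) in Hcq by field. rewrite cos_2a_sin in Hcq.
      assert (Hs2 : sin (x/2) = 0) by nra.
      destruct (sin_eq_0_0 _ Hs2) as [m Hm].
      assert (Hql : IZR (q*l) = IZR (m*p)).
      { rewrite !mult_IZR. apply (Rmult_eq_reg_r (PI / IZR p)).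
        2:{ apply Rgt_not_eq. apply Rdiv_lt_0_compat; lra. }
        transitivity (x / 2). { unfold x, th. field. lra. }
        rewrite Hm. field. lra. }
      apply eq_IZR in Hql.
      assert (Hdv : (p | l * q)%Z) by (exists m; lia).
      pose proof (Z.gauss p l q Hdv Hg) as Hpq.
      pose proof (Z.divide_pos_le p q ltac:(lia) Hpq). lia.
  - intros [k Hsim].
    destruct (Z.gcd_bezout p l 1 Hg) as [u [j Hb]].
    assert (Hbr : IZR j * IZR l = 1 - IZR u * IZR p).
    { apply (f_equal IZR) in Hb. rewrite plus_IZR, !mult_IZR in Hb.
      replace (IZR 1) with 1 in Hb by reflexivity. lra. }
    set (psi := PI / IZR p).
    set (phi := th - psi).
    assert (Hpsi0 : 0 < psi) by (unfold psi; apply Rdiv_lt_0_compat; lra).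
    assert (Hpsith : psi < th).
    { unfold psi, th. unfold Rdiv. apply Rmult_lt_compat_r.
      apply Rinv_0_lt_compat; lra. nra. }
    assert (Hspsi : 0 < sin psi) by (apply sin_gt_0; lra).
    assert (Hsphi : 0 < sin phi) by (apply sin_gt_0; unfold phi; lra).
    pose proof (cross_id psi phi ltac:(lra)) as CR. cbv zeta in CR. destruct CR as [Xc Xs].
    set (s0 := sin psi / (sin psi + sin phi)) in *.
    assert (Hs0 : 0 < s0 < 1).
    { unfold s0. split. apply Rdiv_lt_0_compat; lra.
      apply (Rmult_lt_reg_r (sin psi + sin phi)); [lra|]. field_simplify; lra. }
    assert (Hp0 : (p <> 0)%Z) by lia.
    pose proof (Z.div_mod (-k) p Hp0) as Dka. pose proof (Z.mod_pos_bound (-k) p ltac:(lia)) as Bka.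
    pose proof (Z.div_mod (j-1-k) p Hp0) as Dkb. pose proof (Z.mod_pos_bound (j-1-k) p ltac:(lia)) as Bkb.
    set (a := (k + (-k) mod p)%Z). set (b := (k + (j-1-k) mod p)%Z).
    set (ma := (- ((-k) / p))%Z). set (mb := (- ((j-1-k) / p))%Z).
    assert (Ha : a = (ma * p)%Z) by (unfold a, ma; lia).
    assert (Hbq : b = (j - 1 + mb * p)%Z) by (unfold b, mb; lia).
    assert (Hab : a <> b).
    { intro E. rewrite Ha, Hbq in E.
      assert (Ej : j = (1 + (ma - mb) * p)%Z) by lia. rewrite Ej in Hb.
      assert (Ew : (p * (u + (ma - mb) * l) = 1 - l)%Z) by lia.
      destruct (Z_lt_le_dec (u + (ma - mb) * l) 0) as [W|W]; nia. }
    assert (Aa : IZR a * th = 0 + 2 * IZR (ma * l) * PI).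
    { rewrite Ha. replace (ma * p)%Z with (0 + ma * p)%Z by ring. rewrite Hper.
      replace (IZR 0) with 0 by reflexivity. ring. }
    assert (Aa1 : IZR (a + 1) * th = th + 2 * IZR (ma * l) * PI).
    { rewrite Ha. replace (ma * p + 1)%Z with (1 + ma * p)%Z by ring. rewrite Hper.
      replace (IZR 1) with 1 by reflexivity. ring. }
    assert (Ab : IZR b * th = (psi - phi) + 2 * IZR (mb * l - u) * PI).
    { rewrite Hbq. rewrite Hper.
      replace (IZR (j-1) * th) with (2*PI/IZR p * (IZR j * IZR l) - th)
        by (unfold th; rewrite minus_IZR; field; lra).
      rewrite Hbr. unfold phi, psi, th. rewrite minus_IZR, !mult_IZR. field. lra. }
    assert (Ab1 : IZR (b + 1) * th = (psi + psi) + 2 * IZR (mb * l - u) * PI).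
    { rewrite plus_IZR. replace ((IZR b + IZR 1) * th) with (IZR b * th + th) by
        (replace (IZR 1) with 1 by reflexivity; ring).
      rewrite Ab. unfold phi. ring. }
    assert (Cth : th = psi + phi) by (unfold phi; ring).
    assert (Heq : IZR a + s0 = IZR b + (1 - s0)).
    { apply (Hsim (IZR a + s0) (IZR b + (1 - s0))).
      - assert (IZR k <= IZR a) by (apply IZR_le; unfold a; lia).
        assert (HH : IZR (a + 1) <= IZR (k + p)) by (apply IZR_le; unfold a; lia).
        rewrite !plus_IZR in HH. rewrite plus_IZR. replace (IZR 1) with 1 in HH by reflexivity. lra.
      - assert (IZR k <= IZR b) by (apply IZR_le; unfold b; lia).
        assert (HH : IZR (b + 1) <= IZR (k + p)) by (apply IZR_le; unfold b; lia).
        rewrite !plus_IZR in HH. rewrite plus_IZR. replace (IZR 1) with 1 in HH by reflexivity. lra.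
      - unfold interp. cbv zeta.
        rewrite !Int_part_shift by lra.
        replace (IZR a + s0 - IZR a) with s0 by ring.
        replace (IZR b + (1 - s0) - IZR b) with (1 - s0) by ring.
        unfold vadd, vscale, tangent, vsub. cbn [fst snd].
        f_equal.
        + rewrite !Hrx. apply comb.
          * rewrite Aa, Aa1, Ab, Ab1, !cos_perZ, Cth. exact Xc.
          * rewrite Aa, Aa1, Ab, Ab1, !sin_perZ, Cth. exact Xs.
        + rewrite !Hry. apply comb.
          * rewrite Aa, Aa1, Ab, Ab1, !cos_perZ, Cth. exact Xc.
          * rewrite Aa, Aa1, Ab, Ab1, !sin_perZ, Cth. exact Xs. }
    destruct (Z_lt_le_dec a b) as [Hlt|Hle].
    + assert (HH : IZR (a + 1) <= IZR b) by (apply IZR_le; lia). rewrite plus_IZR in HH.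
      replace (IZR 1) with 1 in HH by reflexivity. lra.
    + assert (HH : IZR (b + 1) <= IZR a) by (apply IZR_le; lia). rewrite plus_IZR in HH.
      replace (IZR 1) with 1 in HH by reflexivity. lra.
Qed.
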